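(* Let $t:\Sigma^*\to\Omega^*$ be a rational partial function with suffix-closed domain $X=\mathrm{dom}(t)$. There is a constant $c$ (depending only on $t$) such that for all $u,v,w\in\Sigma^*$ with $uw,vw\in X$ and $u\mathrel{\mathcal R_t}v$ we have $\|t(uw),t(vw)\|\le c\,(|u|+|v|)$, i.e. $\|t(uw),t(vw)\|\in O(|u|+|v|)$.
   Context: For words $x,y$, $x\wedge y$ is their longest common suffix and $\|x,y\|=|x|+|y|-2|x\wedge y|$. $u\mathrel{\mathcal R_t}v$ iff $\{z:uz\in X\}=\{z:vz\in X\}$ and the set $\{\|t(uw),t(vw)\|:uw,vw\in X\}$ is finite. *)

(* Defs.v *)
From mathcomp Require Import all_boot.
Set Implicit Arguments. Unset Strict Implicit. Unset Printing Implicit Defensive.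

Record transducer (Sig Om : finType) := Transducer {
  tstate : finType;
  tinit : pred tstate;
  tfinal : pred tstate;
  ttrans : seq (tstate * seq Sig * seq Om * tstate) }.

Inductive trun (Sig Om : finType) (T : transducer Sig Om) :
  tstate T -> seq Sig -> seq Om -> tstate T -> Prop :=
| trun_nil p : @trun Sig Om T p [::] [::] p
| trun_cons p x y q xs ys r :
    (p, x, y, q) \in @ttrans Sig Om T -> @trun Sig Om T q xs ys r -> @trun Sig Om T p (x ++ xs) (y ++ ys) r.

Definition taccepts (Sig Om : finType) (T : transducer Sig Om) (x : seq Sig) (y : seq Om) :=
  exists (p q : tstate T), @tinit Sig Om T p /\ @tfinal Sig Om T q /\ @trun Sig Om T p x y q.

Definition rational_function (Sig Om : finType) (t : seq Sig -> option (seq Om)) :=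
  exists T : transducer Sig Om, forall x y, t x = Some y <-> taccepts T x y.

Definition in_dom (Sig Om : Type) (t : seq Sig -> option (seq Om)) (x : seq Sig) :=
  t x <> None.

Definition suffix_closed_dom (Sig Om : Type) (t : seq Sig -> option (seq Om)) :=
  forall u w : seq Sig, in_dom t (u ++ w) -> in_dom t w.

Fixpoint lcp (A : eqType) (s1 s2 : seq A) : nat :=
  match s1, s2 with
  | a :: s1', b :: s2' => if a == b then (lcp s1' s2').+1 else 0
  | _, _ => 0
  end.

Definition lcs (A : eqType) (x y : seq A) : nat := lcp (rev x) (rev y).

Definition wdist (A : eqType) (x y : seq A) : nat := size x + size y - 2 * lcs x y.

Definition Rt (Sig Om : finType) (t : seq Sig -> option (seq Om)) (u v : seq Sig) :=
  (forall z, in_dom t (u ++ z) <-> in_dom t (v ++ z)) /\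
  exists s : seq nat, forall w y1 y2,
    t (u ++ w) = Some y1 -> t (v ++ w) = Some y2 -> wdist y1 y2 \in s.

(* Main.v *)
Require Import Defs.
From mathcomp Require Import all_boot zify.
Set Implicit Arguments. Unset Strict Implicit. Unset Printing Implicit Defensive.

Inductive crun (Sig Om : finType) (T : transducer Sig Om) :
  (tstate T * seq Sig) -> seq Sig -> seq Om -> (tstate T * seq Sig) -> Prop :=
| cr_nil c : crun c [::] [::] c
| cr_eps p x y q xs ys e : (p, x, y, q) \in ttrans T -> crun (q, x) xs ys e ->
    crun (p, [::]) xs (y ++ ys) e
| cr_read q a r xs ys e : crun (q, r) xs ys e -> crun (q, a :: r) (a :: xs) ys e.
Arguments crun {Sig Om T}.

Lemma crun_cat (Sig Om : finType) (T : transducer Sig Om) c x y d x' y' e :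
  @crun _ _ T c x y d -> crun d x' y' e -> crun c (x ++ x') (y ++ y') e.
Proof.
elim=> {c x y d} [c//|p x y q xs ys d H _ IH|q a r xs ys d _ IH] H2.
- by rewrite -catA; apply: cr_eps H (IH H2).
- by apply: cr_read; apply: IH.
Qed.

Lemma crun_split (Sig Om : finType) (T : transducer Sig Om) c x x' y e :
  @crun _ _ T c (x ++ x') y e ->
  exists d y1 y2, [/\ crun c x y1 d, crun d x' y2 e & y = y1 ++ y2].
Proof.
move Hz: (x ++ x') => z H; elim: H x Hz => {c z y e}
  [c|p x0 y q xs ys e H _ IH|q a r xs ys e Hr IH] x Hz.
- case: x Hz => //= ->.
  by exists c, [::], [::]; split=> //; apply: cr_nil.
- have [d [y1 [y2 [H1 H2 ->]]]] := IH x Hz.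
  by exists d, (y ++ y1), y2; split=> //; [apply: cr_eps H H1 | rewrite catA].
- case: x Hz => [|b x] /= Hz.
  + exists (q, a :: r), [::], ys; split=> //; first exact: cr_nil.
    by rewrite Hz; apply: cr_read.
  + case: Hz => <- Hz; have [d [y1 [y2 [H1 H2 ->]]]] := IH x Hz.
    by exists d, y1, y2; split=> //; apply: cr_read.
Qed.

Lemma crun_read (Sig Om : finType) (T : transducer Sig Om) q x xs ys e :
  @crun _ _ T (q, [::]) xs ys e -> crun (q, x) (x ++ xs) ys e.
Proof. by elim: x => //= a x IH H; apply: cr_read; apply: IH. Qed.

Lemma trun_crun (Sig Om : finType) (T : transducer Sig Om) p x y q :
  trun p x y q -> @crun _ _ T (p, [::]) x y (q, [::]).
Proof.
elim=> {p x y q} [p|p x y q xs ys r H _ IH]; first exact: cr_nil.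
by apply: cr_eps H _; apply: crun_read.
Qed.

Lemma crun_trun (Sig Om : finType) (T : transducer Sig Om) c xs ys e :
  @crun _ _ T c xs ys e -> forall r, e = (r, [::]) -> forall q z, c = (q, z) ->
  exists xs', xs = z ++ xs' /\ trun q xs' ys r.
Proof.
elim=> {c xs ys e} [c|p x y q xs ys e H _ IH|q a r0 xs ys e _ IH] r Er q' z Ec.
- subst; case: Ec => -> <-; exists [::]; split=> //; exact: trun_nil.
- case: Ec => <- <-; have [xs' [-> Hr]] := IH r Er q x erefl.
  by exists (x ++ xs'); split=> //; apply: trun_cons H Hr.
- case: Ec => <- <-; have [xs' [-> Hr]] := IH r Er q r0 erefl.
  by exists xs'.
Qed.

Lemma crun_accept (Sig Om : finType) (T : transducer Sig Om) p x y q :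
  @crun _ _ T (p, [::]) x y (q, [::]) -> trun p x y q.
Proof. by move=> H; have [xs' [-> H']] := crun_trun H erefl erefl. Qed.

Definition ocs (Sig Om : finType) (T : transducer Sig Om) : seq (tstate T * seq Sig) :=
  [seq (p, [::]) | p <- enum (tstate T)] ++
  [seq (tau.2, drop j tau.1.1.2) | tau <- ttrans T, j <- iota 0 (size tau.1.1.2).+1].

Lemma ocs_state (Sig Om : finType) (T : transducer Sig Om) p : (p, [::]) \in ocs T.
Proof. by rewrite mem_cat; apply/orP; left; apply: map_f; rewrite mem_enum. Qed.

Lemma ocs_trans (Sig Om : finType) (T : transducer Sig Om) p x y q j :
  (p, x, y, q) \in ttrans T -> (q, drop j x) \in ocs T.
Proof.
move=> H; case: (leqP j (size x)) => Hj; last first.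
  by rewrite drop_oversize ?ocs_state // ltnW.
rewrite mem_cat; apply/orP; right; apply/allpairsPdep.
by exists (p, x, y, q), j; split=> //; rewrite mem_iota.
Qed.

Lemma ocs_read (Sig Om : finType) (T : transducer Sig Om) q a r :
  (q, a :: r) \in ocs T -> (q, r) \in ocs T.
Proof.
rewrite mem_cat => /orP[/mapP[p _ //]|/allpairsPdep[[[[p x] y] q'] [j [Ht _ /= [-> E]]]]].
have : r = drop j.+1 x.
  by rewrite -add1n -drop_drop -E /= drop0.
by move=> ->; apply: ocs_trans Ht.
Qed.

Definition oK (Sig Om : finType) (T : transducer Sig Om) :=
  sumn [seq size tau.1.2 | tau <- ttrans T].

Lemma sumn_mem (A : eqType) (f : A -> nat) s x : x \in s -> f x <= sumn (map f s).
Proof.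
elim: s => //= b s IH; rewrite in_cons => /orP[/eqP->|/IH]; first exact: leq_addr.
by move=> H; apply: leq_trans H (leq_addl _ _).
Qed.

Lemma oK_bound (Sig Om : finType) (T : transducer Sig Om) p x y q :
  (p, x, y, q) \in ttrans T -> size y <= oK T.
Proof. by move=> H; apply: (sumn_mem (fun tau : tstate T * seq Sig * seq Om * tstate T => size tau.1.2) H). Qed.

Definition edge (Sig Om : finType) (T : transducer Sig Om) (c : tstate T * seq Sig) (y : seq Om) d :=
  exists p x q, [/\ c = (p, [::]), (p, x, y, q) \in ttrans T & d = (q, x)].

Inductive epath (Sig Om : finType) (T : transducer Sig Om) :
  (tstate T * seq Sig) -> seq Om -> (tstate T * seq Sig) -> Prop :=
| ep_nil c : epath c [::] c
| ep_cons c y d z e : edge c y d -> epath d z e -> epath c (y ++ z) e.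

Inductive spath (Sig Om : finType) (T : transducer Sig Om) :
  seq (tstate T * seq Sig) -> (tstate T * seq Sig) -> seq Om -> (tstate T * seq Sig) -> Prop :=
| sp_nil c : spath [:: c] c [::] c
| sp_cons c y d L z e : edge c y d -> spath L d z e -> c \notin L -> spath (c :: L) c (y ++ z) e.

Lemma spath_suffix (Sig Om : finType) (T : transducer Sig Om) L d z e c :
  @spath _ _ T L d z e -> c \in L -> exists L' z', spath L' c z' e.
Proof.
elim=> {L d z e} [d|d y d' L z e Hd HL IH Hn].
  by rewrite inE => /eqP->; exists [:: d], [::]; apply: sp_nil.
rewrite inE => /orP[/eqP->|/IH //]; exists (d :: L), (y ++ z); exact: sp_cons Hd HL Hn.
Qed.

Lemma epath_spath (Sig Om : finType) (T : transducer Sig Om) c y e :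
  @epath _ _ T c y e -> exists L y', spath L c y' e.
Proof.
elim=> {c y e} [c|c y d z e Hd _ [L [y' HL]]]; first by exists [:: c], [::]; apply: sp_nil.
case: (boolP (c \in L)) => Hc; first exact: spath_suffix HL Hc.
by exists (c :: L), (y ++ y'); exact: sp_cons Hd HL Hc.
Qed.

Lemma edge_ocs (Sig Om : finType) (T : transducer Sig Om) c y d :
  @edge _ _ T c y d -> d \in ocs T /\ size y <= oK T.
Proof.
case=> p [x [q [_ H ->]]]; split; last exact: oK_bound H.
by have := ocs_trans 0 H; rewrite drop0.
Qed.

Lemma spath_prop (Sig Om : finType) (T : transducer Sig Om) L c y e :
  @spath _ _ T L c y e -> c \in ocs T ->
  [/\ uniq L, all (mem (ocs T)) L, e \in ocs T & size y <= oK T * (size L).-1].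
Proof.
elim=> {L c y e} [c|c y d L z e Hd HL IH Hn] Hc.
  by rewrite /= Hc; split.
have [Hd1 Hd2] := edge_ocs Hd.
have [U A E S] := IH Hd1; split=> //=; first by rewrite Hn U.
  by rewrite Hc A.
case: L HL {IH U A Hn} S => [|l L] HL S; first by inversion HL.
rewrite size_cat /= mulnS; exact: leq_add.
Qed.

Lemma spath_epath (Sig Om : finType) (T : transducer Sig Om) L c y e :
  @spath _ _ T L c y e -> epath c y e.
Proof.
elim=> {L c y e} [c|c y d L z e Hd _ IH _]; [exact: ep_nil | exact: ep_cons Hd IH].
Qed.

Lemma epath_crun (Sig Om : finType) (T : transducer Sig Om) c y d x z e :
  @epath _ _ T c y d -> crun d x z e -> crun c x (y ++ z) e.
Proof.
elim=> {c y d} [c//|c y d z' e' [p [x' [q [-> Ht ->]]]] _ IH] H.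
by rewrite -catA; apply: cr_eps Ht _; apply: IH.
Qed.

Lemma crun_decomp (Sig Om : finType) (T : transducer Sig Om) c x y e :
  @crun _ _ T c x y e -> exists y0 d y1, [/\ epath c y0 d, y = y0 ++ y1 &
    (x = [::] /\ d = e /\ y1 = [::]) \/
    exists q a r xs, [/\ x = a :: xs, d = (q, a :: r) & crun (q, r) xs y1 e]].
Proof.
elim=> {c x y e} [c|p x y q xs ys e H Hr IH|q a r xs ys e Hr _].
- by exists [::], c, [::]; split=> //; [exact: ep_nil | left].
- have [y0 [d [y1 [E1 -> Hc]]]] := IH.
  exists (y ++ y0), d, y1; split=> //; last by rewrite catA.
  by apply: ep_cons E1; exists p, x, q.
- exists [::], (q, a :: r), ys; split=> //; first exact: ep_nil.
  by right; exists q, a, r, xs.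
Qed.

Lemma crun_short (Sig Om : finType) (T : transducer Sig Om) x c y e :
  @crun _ _ T c x y e -> c \in ocs T ->
  exists y', crun c x y' e /\ size y' <= oK T * size (ocs T) * (size x).+1.
Proof.
elim: x c y e => [|a x IH] c y e H Hc;
  have [y0 [d [y1 [E0 Ey Hc']]]] := crun_decomp H;
  have [L [y0' SP]] := epath_spath E0;
  have [U A Ed S] := spath_prop SP Hc;
  have SL : (size L).-1 <= size (ocs T)
    by apply: leq_trans (leq_pred _) _; apply: uniq_leq_size U _; apply/allP.
- case: Hc' => [[_ [Hd Hy]]|[q [a [r [xs [//]]]]]]; subst d y1.
  exists (y0' ++ [::]); split; first by apply: epath_crun (spath_epath SP) (cr_nil _).
  rewrite cats0 muln1; apply: leq_trans S _; exact: leq_mul.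
- case: Hc' => [[//]|[q [b [r [xs [[<- <-] Hd Hr]]]]]]; subst d.
  have [y1' [H1 S1]] := IH _ _ _ Hr (ocs_read Ed).
  exists (y0' ++ y1'); split; first by apply: epath_crun (spath_epath SP) (cr_read _ H1).
  rewrite size_cat /= mulnS; apply: leq_add => //.
  apply: leq_trans S _; exact: leq_mul.
Qed.

Definition pw (A : Type) (g : seq A) k := flatten (nseq k g).
Definition Pd (A : eqType) (x y : seq A) := size x + size y - 2 * lcp x y.

Lemma catsI (A : Type) (s a b : seq A) : s ++ a = s ++ b -> a = b.
Proof. by elim: s => //= x s IH [] /IH. Qed.

Lemma lcp_le (A : eqType) (x y : seq A) : lcp x y <= size x /\ lcp x y <= size y.
Proof.
elim: x y => [|a x IH] [|b y] //=; case: ifP => // _.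
by have [] := IH y; split.
Qed.

Lemma lcp_take (A : eqType) (x y : seq A) n : n <= lcp x y -> take n x = take n y.
Proof.
elim: x y n => [|a x IH] [|b y] [|n] //=; case: ifP => // /eqP -> H.
by rewrite (IH y n H).
Qed.

Lemma lcp_sym (A : eqType) (x y : seq A) : lcp x y = lcp y x.
Proof. by elim: x y => [|a x IH] [|b y] //=; rewrite eq_sym IH. Qed.

Lemma lcp_catl (A : eqType) (z x y : seq A) : lcp (z ++ x) (z ++ y) = size z + lcp x y.
Proof. by elim: z => //= a z ->; rewrite eqxx. Qed.

Lemma lcp_refl (A : eqType) (x : seq A) : lcp x x = size x.
Proof. by elim: x => //= a x ->; rewrite eqxx. Qed.

Lemma Pd_sym (A : eqType) (x y : seq A) : Pd x y = Pd y x.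
Proof. by rewrite /Pd lcp_sym addnC. Qed.

Lemma Pd_catl (A : eqType) (z x y : seq A) : Pd (z ++ x) (z ++ y) = Pd x y.
Proof. rewrite /Pd lcp_catl !size_cat; lia. Qed.

Lemma size_pw (A : Type) (g : seq A) k : size (pw g k) = k * size g.
Proof. by elim: k => //= k IH; rewrite size_cat IH mulSn. Qed.

Lemma pw_comm (A : Type) (g : seq A) k : pw g k ++ g = g ++ pw g k.
Proof. by elim: k => [|k IH] /=; rewrite ?cats0 // -catA IH. Qed.

Lemma pw_shift (A : Type) (e g h : seq A) k :
  e ++ g = h ++ e -> e ++ pw g k = pw h k ++ e.
Proof.
move=> H; elim: k => [|k IH] /=; first by rewrite cats0.
by rewrite catA H -catA IH catA.
Qed.

Lemma rev_pw (A : Type) (g : seq A) k : rev (pw g k) = pw (rev g) k.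
Proof.
elim: k => //= k IH; rewrite rev_cat IH.
by rewrite (pw_comm (rev g)).
Qed.

Lemma Pd_lb (A : eqType) (x y : seq A) : size x - size y <= Pd x y.
Proof. have [H1 H2] := lcp_le x y; rewrite /Pd; lia. Qed.

Lemma key_pre (A : eqType) (b1 g a1 b2 h a2 : seq A) B :
  (forall k, Pd (b1 ++ pw g k ++ a1) (b2 ++ pw h k ++ a2) <= B) ->
  size b2 <= size b1 ->
  Pd (b1 ++ a1) (b2 ++ a2) = Pd (b1 ++ g ++ a1) (b2 ++ h ++ a2).
Proof.
move=> HB Hb.
have Egh : size g = size h.
  set k := B + size b2 + size a2 + size b1 + size a1 + 1.
  have H := HB k.
  have H1 := Pd_lb (b1 ++ pw g k ++ a1) (b2 ++ pw h k ++ a2).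
  have H2 := Pd_lb (b2 ++ pw h k ++ a2) (b1 ++ pw g k ++ a1).
  rewrite Pd_sym in H2.
  move: H1 H2; rewrite !size_cat !size_pw => H1 H2.
  case: (ltngtP (size g) (size h)) => // Hgh.
  - have : k * (size g).+1 <= k * size h by rewrite leq_mul2l Hgh orbT.
    rewrite mulnS; lia.
  - have : k * (size h).+1 <= k * size g by rewrite leq_mul2l Hgh orbT.
    rewrite mulnS; lia.
case Em: (size g) => [|m].
  have -> : g = [::] by apply/eqP; rewrite -size_eq0 Em.
  have -> : h = [::] by apply/eqP; rewrite -size_eq0 -Egh Em.
  by [].
have [k' Ek'] : {k' | k' = B + size b1 + 1} by exists (B + size b1 + 1).
have HBk := HB k'.+1.
set x := b1 ++ pw g k'.+1 ++ a1 in HBk.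
set y := b2 ++ pw h k'.+1 ++ a2 in HBk.
have [L1 L2] := lcp_le x y.
have Sx : size x = size b1 + k'.+1 * m.+1 + size a1 by rewrite /x !size_cat size_pw Em mulSn addnA.
have Sy : size y = size b2 + k'.+1 * m.+1 + size a2 by rewrite /y !size_cat size_pw -Egh Em mulSn addnA.
have Hkm : k' <= k' * m.+1 by rewrite leq_pmulr.
have Hl : size b1 + m.+1 <= lcp x y.
  move: HBk; rewrite /Pd Sx Sy mulSn; lia.
have Ht := lcp_take Hl.
have Tx : take (size b1 + m.+1) x = b1 ++ g.
  have Hpwg : pw g k'.+1 = g ++ pw g k' by [].
  by rewrite /x Hpwg -catA catA take_size_cat // size_cat Em.
have Ty : take (size b1 + m.+1) y = b2 ++ take (size b1 - size b2 + m.+1) (pw h k'.+1).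
  have En : size b1 + m.+1 = size b2 + (size b1 - size b2 + m.+1) by lia.
  rewrite /y En takeD take_size_cat // drop_size_cat // takel_cat // size_pw -Egh Em.
  lia.
rewrite Tx Ty in Ht.
set e := drop (size b2) b1.
have Eb1 : b1 = b2 ++ e.
  have : take (size b2) (b1 ++ g) = b2 by rewrite Ht take_size_cat.
  rewrite takel_cat // => Tb; by rewrite -{1}(cat_take_drop (size b2) b1) Tb.
have Se : size e = size b1 - size b2 by rewrite size_drop.
have {}Ht : e ++ g = take (size e + m.+1) (pw h k'.+1).
  by apply: (@catsI _ b2); rewrite catA -Eb1 Ht Se.
have Hpw : pw h k'.+1 = h ++ pw h k' by [].
have Ee : e = take (size e) (pw h k').
  have : take (size e) (e ++ g) = e by rewrite take_size_cat.
  rewrite Ht take_takel ?leq_addr // Hpw -pw_comm takel_cat // size_pw -Egh Em.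
  lia.
have Eeg : e ++ g = h ++ e.
  have Sh : size h = m.+1 by rewrite -Egh.
  by rewrite Ht Hpw addnC takeD take_size_cat // drop_size_cat // -Ee.
have Hj : forall j, b1 ++ pw g j ++ a1 = b2 ++ pw h j ++ (e ++ a1).
  by move=> j; rewrite Eb1 -catA; congr (b2 ++ _); rewrite catA (pw_shift j Eeg) -catA.
have := Hj 0; have := Hj 1; rewrite /pw /= ?cats0 => -> ->.
by rewrite !Pd_catl.
Qed.

Lemma wdist_Pd (A : eqType) (x y : seq A) : wdist x y = Pd (rev x) (rev y).
Proof. by rewrite /wdist /Pd /lcs !size_rev. Qed.

Lemma key (A : eqType) (a1 g b1 a2 h b2 : seq A) B :
  (forall k, wdist (a1 ++ pw g k ++ b1) (a2 ++ pw h k ++ b2) <= B) ->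
  wdist (a1 ++ b1) (a2 ++ b2) = wdist (a1 ++ g ++ b1) (a2 ++ h ++ b2).
Proof.
move=> HB.
have HB' : forall k, Pd (rev b1 ++ pw (rev g) k ++ rev a1) (rev b2 ++ pw (rev h) k ++ rev a2) <= B.
  by move=> k; have := HB k; rewrite wdist_Pd !rev_cat !rev_pw -!catA.
rewrite !wdist_Pd !rev_cat -!catA.
case: (leqP (size (rev b2)) (size (rev b1))) => Hs.
  exact: key_pre HB' Hs.
rewrite Pd_sym [in RHS]Pd_sym; apply: key_pre (ltnW Hs).
by move=> k; rewrite Pd_sym.
Qed.

Lemma crun_ocs (Sig Om : finType) (T : transducer Sig Om) c x y e :
  @crun _ _ T c x y e -> c \in ocs T -> e \in ocs T.
Proof.
elim=> {c x y e} [c//|p x y q xs ys e H _ IH|q a r xs ys e _ IH] Hc.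
- by apply: IH; have := ocs_trans 0 H; rewrite drop0.
- exact: IH (ocs_read Hc).
Qed.

Lemma crun_pw (Sig Om : finType) (T : transducer Sig Om) f x y k :
  @crun _ _ T f x y f -> crun f (pw x k) (pw y k) f.
Proof.
move=> H; elim: k => [|k IH]; first exact: cr_nil.
exact: crun_cat H IH.
Qed.

Definition pumpable (Sig Om : finType) (T : transducer Sig Om) (c c' : tstate T * seq Sig)
   (w : seq Sig) (y y' : seq Om) (e e' : tstate T * seq Sig) :=
  exists w1 w2 w3 f f' o1 o2 o3 o1' o2' o3',
    w = w1 ++ w2 ++ w3 /\ w2 != [::] /\
    crun c w1 o1 f /\ crun f w2 o2 f /\ crun f w3 o3 e /\
    crun c' w1 o1' f' /\ crun f' w2 o2' f' /\ crun f' w3 o3' e' /\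
    y = o1 ++ o2 ++ o3 /\ y' = o1' ++ o2' ++ o3'.

Definition wit (Sig Om : finType) (T : transducer Sig Om) (c c' : tstate T * seq Sig)
  (pre : seq Sig) (ya ya' : seq Om) (d d' : tstate T * seq Sig)
  (h : (tstate T * seq Sig) * (tstate T * seq Sig)) :=
  exists x1 x2 o1 o2 o1' o2',
    pre = x1 ++ x2 /\ x2 != [::] /\ crun c x1 o1 h.1 /\ crun h.1 x2 o2 d /\
    crun c' x1 o1' h.2 /\ crun h.2 x2 o2' d' /\ ya = o1 ++ o2 /\ ya' = o1' ++ o2'.

Lemma walk (Sig Om : finType) (T : transducer Sig Om) (c c' e e' : tstate T * seq Sig)
  (w : seq Sig) (y y' : seq Om) rest :
  forall pre d d' ya ya' yb yb' H,
  w = pre ++ rest ->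
  crun c pre ya d -> crun c' pre ya' d' -> crun d rest yb e -> crun d' rest yb' e' ->
  y = ya ++ yb -> y' = ya' ++ yb' ->
  (forall h, h \in H -> wit c c' pre ya ya' d d' h) ->
  uniq ((d, d') :: H) ->
  all (fun p => (p.1 \in ocs T) && (p.2 \in ocs T)) ((d, d') :: H) ->
  size (ocs T) * size (ocs T) < size ((d, d') :: H) + size rest ->
  pumpable c c' w y y' e e'.
Proof.
elim: rest => [|a rest IH] pre d d' ya ya' yb yb' H Ew Hc Hc' Hd Hd' Ey Ey' HW U A S.
  have : size ((d, d') :: H) <= size [seq (x1, x2) | x1 <- ocs T, x2 <- ocs T].
    apply: uniq_leq_size U _ => p Hp; move/allP: A => /(_ p Hp) /andP[P1 P2].
    by case: p Hp P1 P2 => p1 p2 _ P1 P2; apply: allpairs_f.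
  rewrite size_allpairs => Hle; move: S; rewrite /= addn0 => S; by have := leq_ltn_trans Hle S; rewrite ltnn.
have [d2 [ya2 [yb2 [Hd1 Hd2 Eyb]]]] := crun_split (x := [:: a]) Hd.
have [d2' [ya2' [yb2' [Hd1' Hd2' Eyb']]]] := crun_split (x := [:: a]) Hd'.
move: (A) => /= /andP[/andP[Dd Dd'] A'].
case: (boolP ((d2, d2') \in (d, d') :: H)).
  rewrite inE => /orP[/eqP [E1 E2]|Hin]; first subst d2 d2'.
    exists pre, [:: a], rest, d, d', ya, ya2, yb2, ya', ya2', yb2'.
    split; first by rewrite Ew. split; first done. split; first exact: Hc. split; first exact: Hd1. split; first exact: Hd2. split; first exact: Hc'. split; first exact: Hd1'. split; first exact: Hd2'. by rewrite Ey Eyb Ey' Eyb'.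
  have [x1 [x2 [o1 [o2 [o1' [o2' [E1 [N2 [R1 [R2 [R1' [R2' [Eo Eo']]]]]]]]]]]]] := HW _ Hin.
  exists x1, (x2 ++ [:: a]), rest, d2, d2', o1, (o2 ++ ya2), yb2, o1', (o2' ++ ya2'), yb2'.
  split; first by rewrite Ew E1 -!catA.
  split; first by rewrite -size_eq0 size_cat addn1.
  do 6 (split; first by [|exact: crun_cat R2 Hd1|exact: crun_cat R2' Hd1']).
  by rewrite Ey Eyb Eo Ey' Eyb' Eo' -!catA.
move=> Hn.
have Ed2 := crun_ocs Hd1 Dd; have Ed2' := crun_ocs Hd1' Dd'.
apply: (IH (pre ++ [:: a]) d2 d2' (ya ++ ya2) (ya' ++ ya2') yb2 yb2' ((d, d') :: H)).
- by rewrite Ew -catA.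
- exact: crun_cat Hc Hd1.
- exact: crun_cat Hc' Hd1'.
- done.
- done.
- by rewrite Ey Eyb catA.
- by rewrite Ey' Eyb' catA.
- move=> h; rewrite inE => /orP[/eqP->|Hh].
    by exists pre, [:: a], ya, ya2, ya', ya2'.
  have [x1 [x2 [o1 [o2 [o1' [o2' [E1 [N2 [R1 [R2 [R1' [R2' [Eo Eo']]]]]]]]]]]]] := HW _ Hh.
  exists x1, (x2 ++ [:: a]), o1, (o2 ++ ya2), o1', (o2' ++ ya2').
  split; first by rewrite E1 catA.
  split; first by rewrite -size_eq0 size_cat addn1.
  do 4 (split; first by [|exact: crun_cat R2 Hd1|exact: crun_cat R2' Hd1']).
  by rewrite Eo Eo' -!catA.
- move: U; rewrite /= Hn => ->. by [].
- by rewrite /= Ed2 Ed2' Dd Dd'.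
- by move: S; rewrite /= !addnS.
Qed.

Lemma pump (Sig Om : finType) (T : transducer Sig Om) (c c' e e' : tstate T * seq Sig)
  (w : seq Sig) (y y' : seq Om) :
  crun c w y e -> crun c' w y' e' -> c \in ocs T -> c' \in ocs T ->
  size (ocs T) * size (ocs T) <= size w -> pumpable c c' w y y' e e'.
Proof.
move=> H H' Hc Hc' S.
apply: (walk (pre := [::]) (d := c) (d' := c') (ya := [::]) (ya' := [::]) (H := [::])) => //.
- exact: cr_nil.
- exact: cr_nil.
- exact: H.
- exact: H'.
- by rewrite /= Hc Hc'.
Qed.

Lemma acc_of (Sig Om : finType) (t : seq Sig -> option (seq Om)) (T : transducer Sig Om) x y :
  (forall x y, t x = Some y <-> taccepts T x y) -> t x = Some y ->
  exists p q, [/\ tinit p, tfinal q & @crun _ _ T (p, [::]) x y (q, [::])].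
Proof.
move=> HT /HT [p [q [Hp [Hq H]]]]; exists p, q; split=> //; exact: trun_crun.
Qed.

Lemma of_acc (Sig Om : finType) (t : seq Sig -> option (seq Om)) (T : transducer Sig Om) x y p q :
  (forall x y, t x = Some y <-> taccepts T x y) -> tinit p -> tfinal q ->
  @crun _ _ T (p, [::]) x y (q, [::]) -> t x = Some y.
Proof.
move=> HT Hp Hq H; apply/HT; exists p, q; split=> //; split=> //; exact: crun_accept.
Qed.

Lemma out_bound (Sig Om : finType) (t : seq Sig -> option (seq Om)) (T : transducer Sig Om) x y :
  (forall x y, t x = Some y <-> taccepts T x y) -> t x = Some y ->
  size y <= oK T * size (ocs T) * (size x).+1.
Proof.
move=> HT Hx; have [p [q [Hp Hq H]]] := acc_of HT Hx.
have [y' [H' S]] := crun_short H (ocs_state p).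
by have := of_acc HT Hp Hq H'; rewrite Hx => -[->].
Qed.

Lemma wdist_refl (A : eqType) (x : seq A) : wdist x x = 0.
Proof. rewrite /wdist /lcs lcp_refl size_rev; lia. Qed.

Lemma wdist_le (A : eqType) (x y : seq A) : wdist x y <= size x + size y.
Proof. by rewrite /wdist leq_subr. Qed.

Lemma step (Sig Om : finType) (t : seq Sig -> option (seq Om)) (T : transducer Sig Om)
  u v w y1 y2 B :
  (forall x y, t x = Some y <-> taccepts T x y) ->
  (forall w y1 y2, t (u ++ w) = Some y1 -> t (v ++ w) = Some y2 -> wdist y1 y2 <= B) ->
  t (u ++ w) = Some y1 -> t (v ++ w) = Some y2 ->
  size (ocs T) * size (ocs T) <= size w ->
  exists w' y1' y2', [/\ size w' < size w, t (u ++ w') = Some y1',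
     t (v ++ w') = Some y2' & wdist y1 y2 = wdist y1' y2'].
Proof.
move=> HT HB H1 H2 Sw.
have [p [q [Hp Hq R1]]] := acc_of HT H1.
have [p' [q' [Hp' Hq' R2]]] := acc_of HT H2.
have [d [ya [yb [Ra Rb Ey1]]]] := crun_split R1.
have [d' [ya' [yb' [Ra' Rb' Ey2]]]] := crun_split R2.
have Dd := crun_ocs Ra (ocs_state _).
have Dd' := crun_ocs Ra' (ocs_state _).
have [w1 [w2 [w3 [f [f' [o1 [o2 [o3 [o1' [o2' [o3' [Ew [N2 [F1 [F2 [F3 [F1' [F2' [F3' [Eo Eo']]]]]]]]]]]]]]]]]]]] :=
  pump Rb Rb' Dd Dd' Sw.
have Hk : forall k, t (u ++ (w1 ++ pw w2 k ++ w3)) = Some ((ya ++ o1) ++ pw o2 k ++ o3) /\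
                    t (v ++ (w1 ++ pw w2 k ++ w3)) = Some ((ya' ++ o1') ++ pw o2' k ++ o3').
  move=> k; split.
  - apply: (of_acc HT Hp Hq); rewrite -catA.
    apply: crun_cat Ra _; apply: crun_cat F1 _; apply: crun_cat (crun_pw k F2) F3.
  - apply: (of_acc HT Hp' Hq'); rewrite -catA.
    apply: crun_cat Ra' _; apply: crun_cat F1' _; apply: crun_cat (crun_pw k F2') F3'.
have Hkey := @key _ (ya ++ o1) o2 o3 (ya' ++ o1') o2' o3' B.
have [T1 T2] := Hk 0.
exists (w1 ++ w3), ((ya ++ o1) ++ o3), ((ya' ++ o1') ++ o3'); split => //.
- rewrite Ew !size_cat; move: N2; rewrite -size_eq0 -lt0n => P; rewrite ltn_add2l -[X in X < _]add0n ltn_add2r. exact: P.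
- rewrite Ey1 Ey2 Eo Eo' !catA -(catA _ o2) -(catA _ o2') Hkey //.
  by move=> k; have [K1 K2] := Hk k; exact: HB K1 K2.
Qed.

Theorem lemma20 (Sig Om : finType) (t : seq Sig -> option (seq Om)) :
  rational_function t -> suffix_closed_dom t ->
  exists c : nat, forall u v w : seq Sig, forall y1 y2 : seq Om,
    t (u ++ w) = Some y1 -> t (v ++ w) = Some y2 -> Rt t u v ->
    wdist y1 y2 <= c * (size u + size v).
Proof.
move=> [T HT] _.
set Q := oK T * size (ocs T).
set M := size (ocs T) * size (ocs T).
exists (Q * (2 * M + 3)) => u v w y1 y2 H1 H2 [_ [s Hs]].
have HB : forall w y1 y2, t (u ++ w) = Some y1 -> t (v ++ w) = Some y2 -> wdist y1 y2 <= sumn s.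
  move=> w' z1 z2 K1 K2; have := sumn_mem id (Hs _ _ _ K1 K2); by rewrite map_id.
have small : forall w y1 y2, size w < M -> t (u ++ w) = Some y1 -> t (v ++ w) = Some y2 ->
    wdist y1 y2 <= Q * (2 * M + 3) * (size u + size v).
  move=> w' z1 z2 Sw K1 K2.
  case: (posnP (size u + size v)) => Huv.
    have Eu : u = [::] by apply/nilP; rewrite /nilP; apply/eqP; lia.
    have Ev : v = [::] by apply/nilP; rewrite /nilP; apply/eqP; lia.
    move: K1 K2; rewrite Eu Ev => K1 K2.
    by move: K1; rewrite K2 => -[->]; rewrite wdist_refl.
  apply: leq_trans (wdist_le _ _) _.
  have S1 := out_bound HT K1; have S2 := out_bound HT K2.
  rewrite -/Q in S1 S2; apply: leq_trans (leq_add S1 S2) _.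
  rewrite -mulnDr -mulnA leq_mul2l; apply/orP; right.
  rewrite !size_cat; nia.
move: {2}(size w) (leqnn (size w)) => n; elim: n w y1 y2 H1 H2 => [|n IH] w' z1 z2 K1 K2 Sn.
  case: (ltnP (size w') M) => Sw; first exact: small K1 K2.
  have [w'' [z1' [z2' [S' _ _ _]]]] := step HT HB K1 K2 Sw; lia.
case: (ltnP (size w') M) => Sw; first exact: small K1 K2.
have [w'' [z1' [z2' [S' K1' K2' ->]]]] := step HT HB K1 K2 Sw.
apply: IH K1' K2' _; lia.
Qed.
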